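(* Let $N\ge1$, $\sigma\ge0$, and let $(x_i(t),v_i(t))_{i=1}^N$, $t\ge 0$, be a solution of $$\dot x_i=v_i,\qquad \dot v_i=-\frac{\|v_i\|^2}{\|x_i\|^2}x_i+\sum_{j=1}^N\frac{\psi_{ij}}{N}\big(R(x_j,x_i)v_j-v_i\big)+\sum_{k=1}^N\frac{\sigma}{N}\big(\|x_i\|^2x_k-\langle x_i,x_k\rangle x_i\big),$$ where the $\psi_{ij}$ are nonnegative bounded functions for all $i,j\in\{1,\dots,N\}$. Assume the initial data satisfy $\langle v_i(0),x_i(0)\rangle=0$ and $\|x_i(0)\|=1$ for all $i$. Then for all $i\in\{1,\dots,N\}$ and all $t>0$, $$\langle v_i(t),x_i(t)\rangle=0\quad\text{and}\quad \|x_i(t)\|=1.$$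
   Context: $\|\cdot\|$ is the Euclidean norm and $\langle\cdot,\cdot\rangle$ the standard inner product on $\mathbb{R}^3$; $\mathbb{S}^2$ is the unit sphere. For column vectors $x_1,x_2\in\mathbb{S}^2$ with $x_1\neq -x_2$, the rotation matrix is $R(x_1,x_2)=I$ if $x_1=x_2$, and otherwise $$R(x_1,x_2)=\langle x_1,x_2\rangle I-x_1x_2^T+x_2x_1^T+(1-\langle x_1,x_2\rangle)\,u u^T,\qquad u=\frac{x_1\times x_2}{\|x_1\times x_2\|}.$$ When $x_j=-x_i$ the term $\psi_{ij}R(x_j,x_i)v_j$ is taken to be $0$. *)

(* Defs.v *)
From HB Require Import structures.
From mathcomp Require Import all_boot all_order all_algebra.
From mathcomp Require Import all_classical all_reals all_analysis.
Set Implicit Arguments. Unset Strict Implicit. Unset Printing Implicit Defensive.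
Import Order.TTheory GRing.Theory Num.Theory.
Import numFieldNormedType.Exports.
Local Open Scope ring_scope.

Section Defs.
Variable R : realType.

Definition dot (a b : 'cV[R]_3) : R := \sum_(i < 3) a i 0 * b i 0.

Definition enorm (a : 'cV[R]_3) : R := Num.sqrt (dot a a).

Definition cross (a b : 'cV[R]_3) : 'cV[R]_3 :=
  \col_(i < 3)
    (if val i == 0%N then a 1 0 * b 2 0 - a 2 0 * b 1 0
     else if val i == 1%N then a 2 0 * b 0 0 - a 0 0 * b 2 0
     else a 0 0 * b 1 0 - a 1 0 * b 0 0).

Definition rotR (x1 x2 : 'cV[R]_3) : 'M[R]_3 :=
  if x1 == x2 then 1%:M
  else let u := (enorm (cross x1 x2))^-1 *: cross x1 x2 in
       (dot x1 x2)%:M - x1 *m x2^T + x2 *m x1^T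
       + (1 - dot x1 x2) *: (u *m u^T).

Definition align_term (xj xi vj : 'cV[R]_3) : 'cV[R]_3 :=
  if xj == - xi then 0 else rotR xj xi *m vj.

Definition vel_rhs (N : nat) (sigma : R) (psi : 'I_N -> 'I_N -> R -> R)
  (x v : 'I_N -> R -> 'cV[R]_3) (i : 'I_N) (t : R) : 'cV[R]_3 :=
  - ((enorm (v i t)) ^+ 2 / (enorm (x i t)) ^+ 2) *: x i t
  + \sum_(j < N) (psi i j t / N%:R) *: (align_term (x j t) (x i t) (v j t) - v i t)
  + \sum_(k < N) (sigma / N%:R) *:
        ((enorm (x i t)) ^+ 2 *: x k t - dot (x i t) (x k t) *: x i t).

End Defs.

(* Main.v *)
Require Import Defs.
From HB Require Import structures.
From mathcomp Require Import all_boot all_order all_algebra.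
From mathcomp Require Import all_classical all_reals all_analysis.
From mathcomp Require Import ring lra.
Import Order.TTheory GRing.Theory Num.Theory.
Import numFieldNormedType.Exports.
Local Open Scope classical_set_scope.
Local Open Scope ring_scope.

Section Alg.
Context {R : realType}.
Implicit Types a b c : 'cV[R]_3.


Lemma sum3 (F : 'I_3 -> R) : \sum_(i < 3) F i =
   F ord0 + F (lift ord0 ord0) + F (lift ord0 (lift ord0 ord0)).
Proof. by rewrite !big_ord_recl big_ord0 addr0 addrA. Qed.

Lemma dotE a b : dot a b = a ord0 0 * b ord0 0 + a (lift ord0 ord0) 0 * b (lift ord0 ord0) 0 + a (lift ord0 (lift ord0 ord0)) 0 * b (lift ord0 (lift ord0 ord0)) 0.
Proof. by rewrite /dot sum3. Qed.

Lemma dotC a b : dot a b = dot b a.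
Proof. by rewrite !dotE; ring. Qed.

Lemma dot_ge0 a : 0 <= dot a a.
Proof. by rewrite dotE; rewrite -!expr2 !addr_ge0 ?sqr_ge0. Qed.

Lemma enorm2 a : enorm a ^+ 2 = dot a a.
Proof. by rewrite /enorm sqr_sqrtr // dot_ge0. Qed.

Lemma dotDl a b c : dot (a + b) c = dot a c + dot b c.
Proof. by rewrite !dotE !mxE; ring. Qed.
Lemma dotNl a c : dot (- a) c = - dot a c.
Proof. by rewrite !dotE !mxE; ring. Qed.
Lemma dotBl a b c : dot (a - b) c = dot a c - dot b c.
Proof. by rewrite dotDl dotNl. Qed.
Lemma dotZl k a c : dot (k *: a) c = k * dot a c.
Proof. by rewrite !dotE !mxE; ring. Qed.
Lemma dot0l c : dot 0 c = 0.
Proof. by rewrite !dotE !mxE; ring. Qed.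
Lemma dot_suml n (F : 'I_n -> 'cV[R]_3) c :
  dot (\sum_(j < n) F j) c = \sum_(j < n) dot (F j) c.
Proof.
rewrite /dot; under eq_bigr do rewrite summxE mulr_suml.
by rewrite exchange_big.
Qed.

Lemma l1 : (lift ord0 ord0 : 'I_3) = 1. Proof. by apply/val_inj. Qed.
Lemma l2 : (lift ord0 (lift ord0 ord0) : 'I_3) = 2. Proof. by apply/val_inj. Qed.
Lemma o3 : (ord0 : 'I_3) = 0. Proof. by apply/val_inj. Qed.
Lemma o1 : (ord0 : 'I_1) = 0. Proof. by apply/val_inj. Qed.

Lemma rot_dot (xj xi vj : 'cV[R]_3) :
  dot (rotR xj xi *m vj) xi =
  if xj == xi then dot vj xj else dot xi xi * dot vj xj.
Proof.
rewrite /rotR; case: eqP => [->|_]; first by rewrite mul1mx.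
set u := _ *: cross xj xi.
rewrite !dotE /u !mxE !big_ord_recl !big_ord0 /= !mxE /= !big_ord_recl !big_ord0 /= !mxE /=.
rewrite !l2 !l1 !o3 !o1 ?mulr1n ?mulr0n.
ring.
Qed.

Lemma is_derive_coord (f : R -> 'cV[R]_3) (t : R) df k l :
  is_derive t 1 f df -> is_derive t (1:R) (fun s => f s k l) (df k l).
Proof.
move=> [Hd Hv].
have H : (fun h : R => h^-1 *: ((f \o shift t) (h *: 1) - f t)) @ 0^' --> df.
  by rewrite -Hv; exact: Hd.
have H2 : (fun h : R => h^-1 *: (((fun s => f s k l) \o shift t) (h *: 1) - f t k l))
    @ 0^' --> df k l.
  have -> : (fun h : R => h^-1 *: (((fun s => f s k l) \o shift t) (h *: 1) - f t k l))
     = (fun M : 'cV[R]_3 => M k l) \o (fun h : R => h^-1 *: ((f \o shift t) (h *: 1) - f t)).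
    by apply/funext => h /=; rewrite !mxE.
  apply: continuous_cvg => //; exact: coord_continuous.
apply: DeriveDef; first exact: (cvgP _ H2).
exact: (cvg_lim _ H2).
Qed.

Lemma is_derive_ext (f g : R -> R) t df :
  (forall s, f s = g s) -> is_derive t (1:R) f df -> is_derive t (1:R) g df.
Proof. by move=> e; have -> : f = g by apply/funext. Qed.

Lemma is_derive_dot (f g : R -> 'cV[R]_3) (t : R) df dg :
  is_derive t 1 f df -> is_derive t 1 g dg ->
  is_derive t (1:R) (fun s => dot (f s) (g s)) (dot df (g t) + dot (f t) dg).
Proof.
move=> Hf Hg.
have Hc k : is_derive t (1:R) ((fun s => f s k 0) * (fun s => g s k 0))
      (f t k 0 *: dg k 0 + g t k 0 *: df k 0).
  by apply: is_deriveM; apply: is_derive_coord.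
have := is_derive_sum Hc.
rewrite fct_sumE => H.
have -> : (fun s => dot (f s) (g s)) = (fun x => \sum_(i < 3) ((fun s => f s i 0) * (fun s => g s i 0)) x).
  by apply/funext => s; rewrite /dot.
suff -> : dot df (g t) + dot (f t) dg = \sum_(i < 3) (f t i 0 *: dg i 0 + g t i 0 *: df i 0) by [].
rewrite /dot -big_split /=; apply: eq_bigr => k _; rewrite /GRing.scale /=; ring.
Qed.


Lemma is_derive_ext2 (f g : R -> R) t df dg :
  (forall s, f s = g s) -> df = dg -> is_derive t (1:R) f df -> is_derive t (1:R) g dg.
Proof. by move=> e <-; have -> : f = g by apply/funext. Qed.

Lemma cvg_sumR (T : Type) (F : set_system T) (FF : Filter F) n
  (f : 'I_n -> T -> R) (l : 'I_n -> R) :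
  (forall i, f i @ F --> l i) ->
  (fun t => \sum_(i < n) f i t) @ F --> \sum_(i < n) l i.
Proof.
move=> H; apply: cvg_big => //.
exact: add_continuous.
Qed.

Lemma cvg_dot (T : Type) (F : set_system T) (FF : Filter F) (f g : T -> 'cV[R]_3) f0 g0 :
  f @ F --> f0 -> g @ F --> g0 -> (fun s => dot (f s) (g s)) @ F --> dot f0 g0.
Proof.
move=> Hf Hg; apply: cvg_sumR => k.
apply: cvgM.
  exact: (continuous_cvg _ (@coord_continuous R 3 1 k 0 f0) Hf).
exact: (continuous_cvg _ (@coord_continuous R 3 1 k 0 g0) Hg).
Qed.

Lemma is_derive_expNC (C t : R) :
  is_derive t (1:R) (fun u => expR (- C * u)) (expR (- C * t) * (- C)).
Proof.
have H : is_derive t (1:R) (fun u : R => - C * u) (- C).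
  apply: (@is_derive_ext2 (cst (- C) * id) _ t ((cst (- C) t)%:A + t *: 0)) => //.
    by rewrite /= scaler0 addr0 /GRing.scale /= mulr1.
exact: (@is_derive1_comp R expR (fun u => - C * u) t _ _ (is_derive_expR _) H).
Qed.
End Alg.

Section Main.
Variables (R : realType) (N : nat) (sigma : R)
  (psi : 'I_N -> 'I_N -> R -> R) (x v : 'I_N -> R -> 'cV[R]_3).
Hypothesis N0 : (0 < N)%N.
Variable M : R.
Hypothesis Hpsi0 : forall i j (t : R), 0 <= t -> 0 <= psi i j t.
Hypothesis HM : forall i j (t : R), 0 <= t -> psi i j t <= M.
Hypothesis Hx : forall i (t : R), 0 < t -> is_derive t 1 (x i) (v i t).
Hypothesis Hv : forall i (t : R), 0 < t -> is_derive t 1 (v i) (vel_rhs sigma psi x v i t).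
Hypothesis Hx0 : forall i, x i @ 0^'+ --> x i 0.
Hypothesis Hv0 : forall i, v i @ 0^'+ --> v i 0.
Hypothesis Hinit : forall i, dot (v i 0) (x i 0) = 0 /\ enorm (x i 0) = 1.

Let a i t := dot (v i t) (x i t).
Let b i t := dot (x i t) (x i t).
Let E t := \sum_(i < N) (a i t * a i t + (b i t - 1) * (b i t - 1)).
Let c i j t := dot (align_term (x j t) (x i t) (v j t)) (x i t).
Let daraw i t := dot (vel_rhs sigma psi x v i t) (x i t) + dot (v i t) (v i t).
Let da i t := \sum_(j < N) (psi i j t / N%:R) * (c i j t - a i t).
Let dE t := \sum_(i < N) (a i t * daraw i t + a i t * daraw i t
    + ((b i t - 1) * (2 * a i t) + (b i t - 1) * (2 * a i t))).

Lemma a_der (i : 'I_N) (t : R) : 0 < t -> is_derive t 1 (a i) (daraw i t).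
Proof. by move=> t0; apply: is_derive_dot; [exact: Hv | exact: Hx]. Qed.

Lemma b_der (i : 'I_N) (t : R) : 0 < t -> is_derive t 1 (b i) (2 * a i t).
Proof.
move=> t0; apply: (@is_derive_ext2 _ _ _ _ (dot (v i t) (x i t) + dot (x i t) (v i t))) => //.
  by rewrite /a (dotC (x i t)) mulr2n mulrDl mul1r.
by apply: is_derive_dot; exact: Hx.
Qed.

Lemma daE (i : 'I_N) (t : R) : b i t != 0 -> daraw i t = da i t.
Proof.
move=> bn0; rewrite /daraw /da /vel_rhs !dotDl dotZl !dot_suml.
rewrite !enorm2 -/(b i t).
rewrite [X in _ + _ + X + _ = _]big1; last first.
    by move=> k _; rewrite dotZl dotBl !dotZl (dotC (x i t)) /b; ring.
rewrite (eq_bigr (fun j => psi i j t / N%:R * (c i j t - a i t))); last first.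
  by move=> j _; rewrite dotZl dotBl.
rewrite mulNr divfK // addr0; ring.
Qed.


Lemma E_der (t : R) : 0 < t -> is_derive t 1 E (dE t).
Proof.
move=> t0.
have H i := is_deriveD (is_deriveM (a_der i t t0) (a_der i t t0))
  (is_deriveM (is_deriveB (b_der i t t0) (is_derive_cst (1:R) t 1))
              (is_deriveB (b_der i t t0) (is_derive_cst (1:R) t 1))).
move: (is_derive_sum H); rewrite fct_sumE.
apply: is_derive_ext2.
  by move=> s; rewrite /E; apply: eq_bigr => i _.
rewrite /dE; apply: eq_bigr => i _ /=; by rewrite /GRing.scale /= !subr0.
Qed.

Lemma cE (i j : 'I_N) (t : R) : c i j t =
  if x j t == - x i t then 0 else if x j t == x i t then a j t else b i t * a j t.
Proof.
rewrite /c /align_term; case: eqP => _; first by rewrite dot0l.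
by rewrite rot_dot.
Qed.


Lemma E_ge0 (t : R) : 0 <= E t.
Proof. by apply: sumr_ge0 => i _; rewrite addr_ge0 // -expr2 sqr_ge0. Qed.

Lemma term_le (i : 'I_N) (t : R) :
  a i t * a i t + (b i t - 1) * (b i t - 1) <= E t.
Proof.
rewrite /E (bigD1 i) //= lerDl; apply: sumr_ge0 => j _.
by rewrite addr_ge0 // -expr2 sqr_ge0.
Qed.


Lemma ac_le (i j : 'I_N) (t : R) : E t < 1/4 ->
  a i t * (c i j t - a i t) <= 2 * E t.
Proof.
move=> E4.
have hi := term_le i t; have hj := term_le j t; have E0 := E_ge0 t.
have sa : 0 <= a i t * a i t by rewrite -expr2 sqr_ge0.
have sb : 0 <= (b i t - 1) * (b i t - 1) by rewrite -expr2 sqr_ge0.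
have saj : 0 <= a j t * a j t by rewrite -expr2 sqr_ge0.
have sbj : 0 <= (b j t - 1) * (b j t - 1) by rewrite -expr2 sqr_ge0.
have p1 : a i t * a j t <= E t.
  have : 0 <= (a i t - a j t) * (a i t - a j t) by rewrite -expr2 sqr_ge0.
  nra.
have p2 : - (a i t * a j t) <= E t.
  have : 0 <= (a i t + a j t) * (a i t + a j t) by rewrite -expr2 sqr_ge0.
  nra.
have bb : 1/2 <= b i t <= 3/2.
  apply/andP; split; nra.
rewrite cE; case: ifP => _; first by nra.
case: ifP => _; first by nra.
have q1 : 0 <= (3/2 - b i t) * E t by apply: mulr_ge0; lra.
have q2 : 0 <= b i t * (E t - a i t * a j t) by apply: mulr_ge0; lra.
nra.
Qed.


Lemma dE_le (t : R) : 0 < t -> E t < 1/4 -> dE t <= N%:R * (4 * M + 2) * E t.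
Proof.
move=> t0 E4.
have E0 := E_ge0 t.
have Nn0 : (N%:R : R) != 0 by rewrite pnatr_eq0 -lt0n.
have Ninv : 0 < (N%:R : R)^-1 by rewrite invr_gt0 ltr0n.
rewrite /dE.
have -> : N%:R * (4 * M + 2) * E t = \sum_(i < N) ((4 * M + 2) * E t).
  by rewrite sumr_const card_ord -[RHS]mulr_natl mulrA.
apply: ler_sum => i _.
have ti := term_le i t.
have bi : b i t != 0.
  apply/negP => /eqP b0; move: ti; rewrite b0.
  have : 0 <= a i t * a i t by rewrite -expr2 sqr_ge0.
  lra.
rewrite daE //.
have hda : a i t * da i t <= 2 * M * E t.
  rewrite /da mulr_sumr.
  have -> : 2 * M * E t = \sum_(j < N) (M / N%:R * (2 * E t)).
    rewrite sumr_const card_ord -mulr_natl; field.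
    exact: Nn0.
  apply: ler_sum => j _.
  have hp := Hpsi0 i j t (ltW t0); have hm := HM i j t (ltW t0).
  have hac := ac_le i j t E4.
  rewrite mulrCA.
  apply: le_trans (ler_wpM2l _ hac) _; first by rewrite divr_ge0.
  have h2 : 0 <= 2 * E t by lra.
  exact: (ler_wpM2r h2 (ler_wpM2r (ltW Ninv) hm)).
have : 0 <= (b i t - 1 - a i t) * (b i t - 1 - a i t) by rewrite -expr2 sqr_ge0.
nra.
Qed.


Lemma E_cont (t : R) : 0 < t -> E @ t --> E t.
Proof.
move=> t0; apply: differentiable_continuous.
apply/derivable1_diffP; exact: (@ex_derive _ _ _ _ _ _ _ (E_der t t0)).
Qed.

Lemma E_right0 : E @ 0^'+ --> E 0.
Proof.
rewrite /E; apply: cvg_sumR => i.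
have ha : a i @ 0^'+ --> a i 0 by apply: cvg_dot.
have hb : b i @ 0^'+ --> b i 0 by apply: cvg_dot.
apply: cvgD; apply: cvgM => //; apply: cvgB => //; exact: cvg_cst.
Qed.

Lemma E_at0 : E 0 = 0.
Proof.
rewrite /E big1 // => i _; have [h1 h2] := Hinit i.
rewrite /a /b h1 -enorm2 h2; ring.
Qed.

Lemma near_dist (f : R -> R) (s : R) (e : R) : 0 < e -> f @ s --> f s ->
  exists2 d, 0 < d & forall u, `|s - u| < d -> `|f s - f u| < e.
Proof.
move=> e0 /cvgrPdist_lt /(_ e e0) /nbhs_ballP [d d0 Hd].
exists d => // u su; apply: Hd; by rewrite -ball_normE /ball_norm /=.
Qed.

Lemma near_dist_right (f : R -> R) (s : R) (e : R) : 0 < e -> f @ s^'+ --> f s ->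
  exists2 d, 0 < d & forall u, s < u -> `|s - u| < d -> `|f s - f u| < e.
Proof.
move=> e0 /cvgrPdist_lt /(_ e e0) /nbhs_ballP [d d0 Hd].
exists d => // u su sud; apply: Hd => //; by rewrite -ball_normE /ball_norm /=.
Qed.


Let C := N%:R * (4 * M + 2).
Let g (u : R) := expR (- C * u).
Let h (u : R) := E u * g u.
Let dh (u : R) := E u * (g u * - C) + g u * dE u.

Lemma h_der (u : R) : 0 < u -> is_derive u 1 h (dh u).
Proof.
move=> u0.
have := @is_deriveM R R E g u 1 _ _ (E_der u u0) (is_derive_expNC C u).
by apply: is_derive_ext2.
Qed.

Lemma g_cont (u : R) : g @ u --> g u.
Proof.
apply: differentiable_continuous.
apply/derivable1_diffP; exact: (@ex_derive _ _ _ _ _ _ _ (is_derive_expNC C u)).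
Qed.

Lemma h_cont (u : R) : 0 < u -> h @ u --> h u.
Proof.
move=> u0; apply: differentiable_continuous.
apply/derivable1_diffP; exact: (@ex_derive _ _ _ _ _ _ _ (h_der u u0)).
Qed.

Lemma dh_le (u : R) : 0 < u -> E u < 1/4 -> dh u <= 0.
Proof.
move=> u0 Eu; have := dE_le u u0 Eu; rewrite -/C /dh => H.
have g0 : 0 < g u by exact: expR_gt0.
nra.
Qed.


Lemma E_zero (t1 : R) : 0 < t1 -> E t1 = 0.
Proof.
move=> t1p; apply/eqP; rewrite eq_le E_ge0 andbT leNgt; apply/negP => Et1.
pose S := [set u : R | 0 <= u <= t1 /\ E u = 0].
have S0 : S 0 by split; [rewrite lexx ltW | exact: E_at0].
have ubS : ubound S t1 by move=> u [/andP[_ ->]].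
have hS : has_sup S by split; [exists 0 | exists t1].
pose s := sup S.
have s0 : 0 <= s := sup_upper_bound hS S0.
have st1 : s <= t1 := ge_sup (ex_intro _ 0 S0) ubS.
have Es : E s = 0.
  have [->|sn0] := eqVneq s 0; first exact: E_at0.
  have sp : 0 < s by rewrite lt_def sn0.
  apply/eqP; rewrite eq_le E_ge0 andbT leNgt; apply/negP => Esp.
  have [d d0 Hd] := near_dist E s (E s) Esp (E_cont s sp).
  have [e [/andP[e0 et1] Ee] se] := sup_adherent d0 hS.
  rewrite -/s in se.
  have es : e <= s := sup_upper_bound hS (conj (introT andP (conj e0 et1)) Ee).
  have H := Hd e; rewrite Ee subr0 in H.
  have : `|E s| < E s by apply: H; rewrite ger0_norm ?subr_ge0 //; lra.
  by rewrite ger0_norm ?E_ge0 // ltxx.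
have ss : s < t1.
  rewrite lt_neqAle st1 andbT; apply/negP => /eqP est.
  by move: Et1; rewrite -est Es ltxx.
have Hr : E @ s^'+ --> E s.
  have [->|sn0] := eqVneq s 0; first exact: E_right0.
  have sp : 0 < s by rewrite lt_def sn0.
  exact: cvg_at_right_filter (E_cont s sp).
have q0 : (0:R) < 1/4 by lra.
have [d d0 Hd] := near_dist_right E s (1/4) q0 Hr.
pose t2 := Num.min (s + d / 2) t1.
have st2 : s < t2 by rewrite /t2 lt_min ss andbT; lra.
have t2t1 : t2 <= t1 by rewrite /t2 ge_min lexx orbT.
have t2d : t2 <= s + d / 2 by rewrite /t2 ge_min lexx.
have t2p : 0 < t2 by lra.
have [cc ccin Hmvt] : exists2 cc, cc \in `]s, t2[ & h t2 - h s = dh cc * (t2 - s).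
  apply: MVT => //.
    move=> y; rewrite in_itv /= => /andP[sy _]; apply: h_der; lra.
  apply/(continuous_within_itvP _ st2); split.
  - move=> y; rewrite in_itv /= => /andP[sy _]; apply: h_cont; lra.
  - apply: cvgM => //; exact: cvg_at_right_filter (g_cont s).
  - exact: cvg_at_left_filter (h_cont t2 t2p).
move: ccin; rewrite in_itv /= => /andP[scc cct2].
have ccp : 0 < cc by lra.
have Ecc : E cc < 1/4.
  have H := Hd cc scc; rewrite Es sub0r normrN in H.
  have : `|E cc| < 1/4 by apply: H; rewrite ltr0_norm ?subr_lt0 //; lra.
  by rewrite ger0_norm ?E_ge0.
have dhle := dh_le cc ccp Ecc.
have hs : h s = 0 by rewrite /h Es mul0r.
have g2 : 0 < g t2 by exact: expR_gt0.
have Et2 : E t2 = 0.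
  have : h t2 <= 0 by move: Hmvt; rewrite hs subr0 => ->; nra.
  rewrite /h => H; apply/eqP; rewrite eq_le E_ge0 andbT.
  by rewrite -(pmulr_lle0 _ g2).
have : t2 <= s.
  apply: sup_upper_bound => //; split => //; rewrite t2t1 andbT; lra.
lra.
Qed.

End Main.

Theorem proposition3p2 (R : realType) (N : nat) (sigma : R)
  (psi : 'I_N -> 'I_N -> R -> R) (x v : 'I_N -> R -> 'cV[R]_3) :
  (0 < N)%N ->
  0 <= sigma ->
  (forall i j (t : R), 0 <= t -> 0 <= psi i j t) ->
  (exists M : R, forall i j (t : R), 0 <= t -> psi i j t <= M) ->
  (* (x, v) is a solution on t >= 0: differentiable for t > 0, right-continuous at 0 *)
  (forall i (t : R), 0 < t -> is_derive t 1 (x i) (v i t)) ->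
  (forall i (t : R), 0 < t -> is_derive t 1 (v i) (vel_rhs sigma psi x v i t)) ->
  (forall i, x i @ 0^'+ --> x i 0) ->
  (forall i, v i @ 0^'+ --> v i 0) ->
  (forall i, dot (v i 0) (x i 0) = 0 /\ enorm (x i 0) = 1) ->
  forall i (t : R), 0 < t -> dot (v i t) (x i t) = 0 /\ enorm (x i t) = 1.
Proof.
move=> N0 _ Hpsi [M HM] Hx Hv Hx0 Hv0 Hinit i t tp.
have EZ := @E_zero R N sigma psi x v N0 M Hpsi HM Hx Hv Hx0 Hv0 Hinit t tp.
have TL := @term_le R N x v i t.
rewrite /= EZ in TL.
have h1 : 0 <= dot (v i t) (x i t) * dot (v i t) (x i t) by rewrite -expr2 sqr_ge0.
have h2 : 0 <= (dot (x i t) (x i t) - 1) * (dot (x i t) (x i t) - 1) by rewrite -expr2 sqr_ge0.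
have ha : dot (v i t) (x i t) = 0 by nra.
have hb : dot (x i t) (x i t) = 1 by nra.
by split => //; rewrite /enorm hb sqrtr1.
Qed.
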